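(* Let $n\ge 2$ be an integer and let $s$ be a positive integer with $2s \ge n + \frac{n}{\sqrt[4]{n}-1}$. Then \[ \frac{r_{2(s+1)}(n)}{n^{\frac{s}{2}}} \le \frac{r_{2s}(n)}{n^{\frac{s-1}{2}}}, \] i.e. $s\mapsto r_{2s}(n)/n^{(s-1)/2}$ is non-increasing on this range of $s$.
   Context: $r_s(n)=\#\{(x_1,\dots,x_s)\in\mathbb{Z}^s : x_1^2+\cdots+x_s^2=n\}$ is the number of representations of $n$ as a sum of $s$ squares. *)

(* Defs.v *)
From Stdlib Require Import Reals ZArith List Arith.
Import ListNotations.

Definition zrange (n : nat) : list Z :=
  map (fun k => (Z.of_nat k - Z.of_nat n)%Z) (seq 0 (2 * n + 1)).

Fixpoint box (s n : nat) : list (list Z) :=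
  match s with
  | O => [ [] ]
  | S s' => flat_map (fun x => map (cons x) (box s' n)) (zrange n)
  end.

Definition sumsq (v : list Z) : Z := fold_right (fun x acc => (x * x + acc)%Z) 0%Z v.

(* r_s(n) = #{ x in Z^s : x_1^2 + ... + x_s^2 = n }.
   Any solution has x_i^2 <= n, hence |x_i| <= n, so all solutions lie in
   the box [-n,n]^s, and each vector appears exactly once in [box s n]. *)
Definition r (s n : nat) : nat :=
  length (filter (fun v => Z.eqb (sumsq v) (Z.of_nat n)) (box s n)).

(* Main.v *)
Require Import Defs.
From Stdlib Require Import Reals ZArith List Arith Lia Lra Psatz.
Import ListNotations.
Open Scope Z_scope.

Definition sumZ {A} (l : list A) (g : A -> Z) : Z := fold_right (fun x acc => g x + acc) 0 l.

Definition F (N m : nat) (k : Z) : Z :=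
  Z.of_nat (length (filter (fun v => Z.eqb (sumsq v) k) (box m N))).

Lemma F_nonneg N m k : 0 <= F N m k.
Proof. unfold F; lia. Qed.

Lemma filter_cons_len (x k : Z) (B : list (list Z)) :
  length (filter (fun v => Z.eqb (sumsq v) k) (map (cons x) B)) =
  length (filter (fun v => Z.eqb (sumsq v) (k - x*x)) B).
Proof.
  induction B as [|v B IH]; simpl; auto.
  replace (Z.eqb (x * x + sumsq v) k) with (Z.eqb (sumsq v) (k - x*x)).
  - destruct (Z.eqb (sumsq v) (k - x*x)); simpl; auto.
  - destruct (Z.eqb_spec (sumsq v) (k - x*x)); destruct (Z.eqb_spec (x*x + sumsq v) k); lia.
Qed.

Lemma F_rec N m k : F N (S m) k = sumZ (zrange N) (fun x => F N m (k - x*x)).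
Proof.
  unfold F. simpl box. generalize (zrange N) as l.
  induction l as [|x l IH]; simpl; auto.
  rewrite filter_app, length_app, Nat2Z.inj_add, IH, filter_cons_len. reflexivity.
Qed.

Lemma sumZ_le {A} (l : list A) f g : (forall x, f x <= g x) -> sumZ l f <= sumZ l g.
Proof. intros H; induction l; simpl; [lia|]. specialize (H a); lia. Qed.

Lemma sumZ_add {A} (l : list A) f g : sumZ l (fun x => f x + g x) = sumZ l f + sumZ l g.
Proof. induction l; simpl; lia. Qed.

Lemma sumZ_mul {A} (l : list A) c f : sumZ l (fun x => c * f x) = c * sumZ l f.
Proof. induction l; simpl; lia. Qed.

Lemma sumZ_nz (l : list nat) (N : nat) c :
  (forall i, In i l -> i <> N) ->
  sumZ (map (fun k => Z.of_nat k - Z.of_nat N) l) (fun x => if Z.eqb x 0 then c else 0) = 0.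
Proof.
  induction l as [|i l IH]; intros H; simpl; auto.
  rewrite IH by (intros; apply H; simpl; auto).
  destruct (Z.eqb_spec (Z.of_nat i - Z.of_nat N) 0); [|lia].
  exfalso; apply (H i); simpl; auto; lia.
Qed.

Lemma sumZ_app {A} (l1 l2 : list A) f : sumZ (l1 ++ l2) f = sumZ l1 f + sumZ l2 f.
Proof. induction l1; simpl; lia. Qed.

Lemma sumZ_ind0 N c : sumZ (zrange N) (fun x => if Z.eqb x 0 then c else 0) = c.
Proof.
  unfold zrange.
  replace (2 * N + 1)%nat with (N + (1 + N))%nat by lia.
  rewrite seq_app, seq_app, !map_app, !sumZ_app.
  rewrite (sumZ_nz (seq 0 N)), (sumZ_nz (seq (0 + N + 1) N)).
  - simpl. rewrite Z.sub_diag. simpl. lia.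
  - intros i Hi. apply in_seq in Hi. lia.
  - intros i Hi. apply in_seq in Hi. lia.
Qed.

Lemma step N m G k :
  (forall j, (Z.of_nat m - j) * F N m j <= Z.of_nat m * G j) ->
  Z.of_nat m * sumZ (zrange N) (fun x => G (k - x*x)) = Z.of_nat m * F N m k ->
  (Z.of_nat m + 1 - k) * F N (S m) k <= (Z.of_nat m + 1) * F N m k.
Proof.
  intros H1 H2. rewrite F_rec.
  rewrite <- sumZ_mul.
  eapply Z.le_trans.
  - apply (sumZ_le _ _ (fun x => Z.of_nat m * G (k - x*x) + (if Z.eqb x 0 then F N m k else 0))).
    intros x. destruct (Z.eqb_spec x 0).
    + subst. replace (k - 0*0) with k by lia. specialize (H1 k).
      pose proof (F_nonneg N m k). nia.
    + specialize (H1 (k - x*x)). pose proof (F_nonneg N m (k - x*x)).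
      assert (1 <= x*x) by nia. nia.
  - rewrite sumZ_add, sumZ_mul, H2, sumZ_ind0. lia.
Qed.

Lemma F0 N j : F N 0 j = if Z.eqb 0 j then 1 else 0.
Proof. unfold F; simpl. destruct j; reflexivity. Qed.

Lemma main_ineq N m k : (Z.of_nat m + 1 - k) * F N (S m) k <= (Z.of_nat m + 1) * F N m k.
Proof.
  revert k. induction m as [|m IH]; intros k.
  - apply (step N 0 (fun _ => 0)).
    + intros j. rewrite F0. destruct (Z.eqb_spec 0 j); subst; simpl; lia.
    + reflexivity.
  - apply (step N (S m) (F N m)).
    + intros j. specialize (IH j). rewrite Nat2Z.inj_succ. lia.
    + rewrite F_rec. reflexivity.
Qed.

Lemma r_F s n : Z.of_nat (r s n) = F n s (Z.of_nat n).
Proof. reflexivity. Qed.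

Close Scope Z_scope.
Open Scope R_scope.

Lemma toR (m : nat) (n : nat) :
  (INR m + 1 - INR n) * INR (r (S m) n) <= (INR m + 1) * INR (r m n).
Proof.
  pose proof (main_ineq n m (Z.of_nat n)) as H.
  rewrite <- !r_F in H.
  apply IZR_le in H.
  rewrite !mult_IZR, minus_IZR, !plus_IZR, <- !INR_IZR_INZ in H. exact H.
Qed.

Theorem lemma3p1 (n s : nat) (hn : (2 <= n)%nat) (hs : (1 <= s)%nat)
  (hbound : 2 * INR s >= INR n + INR n / (Rpower (INR n) (1 / 4) - 1)) :
  INR (r (2 * (s + 1)) n) / Rpower (INR n) (INR s / 2)
    <= INR (r (2 * s) n) / Rpower (INR n) ((INR s - 1) / 2).
Proof.
  set (t := Rpower (INR n) (1/4)) in *.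
  assert (Hn : 2 <= INR n) by (replace 2 with (INR 2) by (simpl; lra); apply le_INR; lia).
  assert (Ht : 1 < t).
  { unfold t. pose proof (Rpower_O (INR n)). pose proof (Rpower_lt (INR n) 0 (1/4)). lra. }
  pose proof (toR (2*s) n) as H1.
  pose proof (toR (S (2*s)) n) as H2.
  replace (2 * (s+1))%nat with (S (S (2*s))) by lia.
  rewrite S_INR in H2. rewrite mult_INR in H1, H2. simpl (INR 2) in H1, H2.
  set (A := INR (r (S (S (2 * s))) n)) in *.
  set (B := INR (r (S (2 * s)) n)) in *.
  set (C := INR (r (2 * s) n)) in *.
  assert (HA : 0 <= A) by apply pos_INR.
  assert (HB : 0 <= B) by apply pos_INR.
  assert (HC : 0 <= C) by apply pos_INR.
  set (D := 2 * INR s - INR n).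
  assert (HD : INR n <= (t - 1) * D).
  { assert (INR n / (t - 1) <= D) by (unfold D; lra).
    apply (Rmult_le_compat_l (t-1)) in H; [|lra].
    replace ((t-1) * (INR n / (t-1))) with (INR n) in H by (field; lra). exact H. }
  assert (HD0 : 0 < D).
  { assert (0 < (t-1) * D) by lra. nra. }
  assert (HBC : B <= t * C).
  { assert ((D + 1) * B <= (D + 1) * (t * C)).
    { assert ((D+1) * B <= (D + 1 + INR n) * C) by (unfold D in *; nra). nra. }
    nra. }
  assert (HAB : A <= t * B).
  { assert ((D + 2) * A <= (D + 2) * (t * B)).
    { assert ((D+2) * A <= (D + 2 + INR n) * B) by (unfold D in *; nra). nra. }
    nra. }
  assert (HAC : A <= C * (t * t)) by nra.
  set (P := Rpower (INR n) ((INR s - 1) / 2)).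
  assert (HP : 0 < P) by (unfold P, Rpower; apply exp_pos).
  assert (Hsplit : Rpower (INR n) (INR s / 2) = P * (t * t)).
  { unfold P, t. rewrite <- !Rpower_plus. f_equal. field. }
  rewrite Hsplit.
  assert (Htt : 0 < t * t) by nra.
  apply (Rmult_le_reg_r (P * (t * t))); [nra|].
  replace (A / (P * (t * t)) * (P * (t * t))) with A by (field; lra).
  replace (C / P * (P * (t * t))) with (C * (t * t)) by (field; lra).
  exact HAC.
Qed.
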